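(* Let $R$ be an order and $X$ a (possibly infinite) set of non-zero ideals of $R$. Then $\overline{X}\subseteq\mathcal{I}(R)$ if and only if $X$ has a coprime basis. Moreover, if $X$ has a coprime basis, then $\{I\in\overline{X}: \#\{J\in\overline{X}: I\subseteq J\}=2\}$ is the minimal coprime basis of $X$.
   Context: An order is a domain whose additive group is isomorphic to $\mathbb{Z}^n$ for some $n$; $K=\mathrm{Q}(R)$ denotes its field of fractions. For $R$-submodules $I,J$ of $K$, $I:J=\{x\in K: xJ\subseteq I\}$. An invertible ideal of $R$ is an $R$-submodule $I\subseteq K$ with $IJ=R$ for some $R$-submodule $J\subseteq K$; $\mathcal{I}(R)$ is the group of invertible ideals. $\overline{X}$ denotes the closure of $X\cup\{R\}$ under addition, multiplication, and integral division, i.e. forming $I:J$ for ideals $I,J\subseteq R$ with $J$ invertible and $I:J\subseteq R$. A coprime basis for $X$ is a set $B$ of invertible ideals strictly contained in $R$ which are pairwise coprime (i.e. $\mathfrak{a}+\mathfrak{b}=R$ for distinct $\mathfrak{a},\mathfrak{b}\in B$) and such that $X$ is contained in the subgroup $\langle B\rangle$ of $\mathcal{I}(R)$ generated by $B$. Coprime bases are partially ordered by $B\le C$ iff $\langle B\rangle\subseteq\langle C\rangle$. *)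

(* Defs.v *)
From HB Require Import structures.
From mathcomp Require Import all_boot all_order all_algebra.
From mathcomp Require Import fraction.
From mathcomp Require Import boolp classical_sets.
Set Implicit Arguments. Unset Strict Implicit. Unset Printing Implicit Defensive.
Import GRing.Theory.
Local Open Scope ring_scope.
Local Open Scope classical_set_scope.

Definition is_order (R : idomainType) : Prop :=
  exists (n : nat) (f : R -> 'rV[int]_n),
    (forall x y : R, f (x - y) = f x - f y) /\ bijective f.

(* K = Q(R) = {fraction R}; R embedded in K via tofrac. *)
Definition Rset (R : idomainType) : set {fraction R} := [set x | exists r : R, x = @FracField.tofrac R r].
Arguments Rset R : clear implicits.
Definition submodule (R : idomainType) (I : set {fraction R}) : Prop :=
  I 0 /\ (forall x y, I x -> I y -> I (x + y)) /\
  (forall r x, Rset R r -> I x -> I (r * x)).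

Definition ideal_of (R : idomainType) (I : set {fraction R}) : Prop :=
  submodule I /\ I `<=` Rset R.

Definition nonzero_ideal (R : idomainType) (I : set {fraction R}) : Prop :=
  ideal_of I /\ I <> [set 0].

Definition msum (R : idomainType) (I J : set {fraction R}) : set {fraction R} :=
  [set z | exists x y, I x /\ J y /\ z = x + y].

Definition mprod (R : idomainType) (I J : set {fraction R}) : set {fraction R} :=
  [set z | exists s : seq ({fraction R} * {fraction R}),
     (forall p, p \in s -> I p.1 /\ J p.2) /\ z = \sum_(p <- s) (p.1 * p.2)].

Definition colon (R : idomainType) (I J : set {fraction R}) : set {fraction R} :=
  [set x | forall y, J y -> I (x * y)].

Definition invertible_ideal (R : idomainType) (I : set {fraction R}) : Prop :=
  submodule I /\ exists J, submodule J /\ mprod I J = Rset R.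

Inductive ideal_closure (R : idomainType) (X : set (set {fraction R}))
  : set {fraction R} -> Prop :=
| cl_X I : X I -> ideal_closure X I
| cl_R : ideal_closure X (Rset R)
| cl_add I J : ideal_closure X I -> ideal_closure X J -> ideal_closure X (msum I J)
| cl_mul I J : ideal_closure X I -> ideal_closure X J -> ideal_closure X (mprod I J)
| cl_div I J : ideal_closure X I -> ideal_closure X J ->
    ideal_of I -> ideal_of J -> invertible_ideal J ->
    colon I J `<=` Rset R -> ideal_closure X (colon I J).

(* subgroup of I(R) generated by B (inverse of invertible_ideal I is R : I) *)
Inductive ideal_gen (R : idomainType) (B : set (set {fraction R}))
  : set {fraction R} -> Prop :=
| gen_R : ideal_gen B (Rset R)
| gen_B I : B I -> ideal_gen B I
| gen_mul I J : ideal_gen B I -> ideal_gen B J -> ideal_gen B (mprod I J)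
| gen_inv I : ideal_gen B I -> ideal_gen B (colon (Rset R) I).

Definition coprime_basis (R : idomainType) (X B : set (set {fraction R})) : Prop :=
  (forall b, B b -> invertible_ideal b /\ b `<=` Rset R /\ b <> Rset R) /\
  (forall a b, B a -> B b -> a <> b -> msum a b = Rset R) /\
  (forall I, X I -> ideal_gen B I).

Definition card_two (T : Type) (S : set T) : Prop :=
  exists a b, a <> b /\ S a /\ S b /\ (forall c, S c -> c = a \/ c = b).

(* Main.v *)
Require Import Defs.
From HB Require Import structures.
From mathcomp Require Import all_boot all_order all_algebra.
From mathcomp Require Import fraction.
From mathcomp Require Import boolp classical_sets.
Set Implicit Arguments. Unset Strict Implicit. Unset Printing Implicit Defensive.
Import GRing.Theory.
Local Open Scope classical_set_scope.
Local Open Scope ring_scope.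

Lemma seteq2 T (A B : set T) : A `<=` B -> B `<=` A -> A = B.
Proof. by move=> h1 h2; rewrite eqEsubset; split. Qed.


Lemma Rset0 (R : idomainType) : Rset R 0.
Proof. by exists 0; rewrite rmorph0. Qed.
Lemma Rset1 (R : idomainType) : Rset R 1.
Proof. by exists 1; rewrite rmorph1. Qed.
Lemma RsetD (R : idomainType) x y : Rset R x -> Rset R y -> Rset R (x + y).
Proof. by move=> [a ->] [b ->]; exists (a + b); rewrite rmorphD. Qed.
Lemma RsetM (R : idomainType) x y : Rset R x -> Rset R y -> Rset R (x * y).
Proof. by move=> [a ->] [b ->]; exists (a * b); rewrite rmorphM. Qed.
Lemma RsetN (R : idomainType) x : Rset R x -> Rset R (- x).
Proof. by move=> [a ->]; exists (- a); rewrite rmorphN. Qed.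

Lemma Rset_sub (R : idomainType) : submodule (Rset R).
Proof. split; [exact: Rset0|split; [exact: RsetD|move=> r x; exact: RsetM]]. Qed.

Lemma sub0 (R : idomainType) (I : set {fraction R}) : submodule I -> I 0.
Proof. by case. Qed.
Lemma subD (R : idomainType) (I : set {fraction R}) x y : submodule I -> I x -> I y -> I (x + y).
Proof. by case=> _ [h _]; apply: h. Qed.
Lemma subM (R : idomainType) (I : set {fraction R}) r x : submodule I -> Rset R r -> I x -> I (r * x).
Proof. by case=> _ [_ h]; apply: h. Qed.
Lemma subN (R : idomainType) (I : set {fraction R}) x : submodule I -> I x -> I (- x).
Proof.
move=> hI Ix; rewrite -mulN1r; apply: subM => //; apply: RsetN; exact: Rset1.
Qed.
Lemma subB (R : idomainType) (I : set {fraction R}) x y : submodule I -> I x -> I y -> I (x - y).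
Proof. by move=> hI Ix Iy; apply: subD => //; apply: subN. Qed.

Lemma mprod_in (R : idomainType) (I J : set {fraction R}) x y : I x -> J y -> mprod I J (x * y).
Proof.
move=> Ix Jy; exists [:: (x, y)]; split; last by rewrite big_cons big_nil addr0.
by move=> p; rewrite inE => /eqP ->.
Qed.
Lemma mprod0 (R : idomainType) (I J : set {fraction R}) : mprod I J 0.
Proof. by exists [::]; split => //; rewrite big_nil. Qed.
Lemma mprodD (R : idomainType) (I J : set {fraction R}) a b :
  mprod I J a -> mprod I J b -> mprod I J (a + b).
Proof.
move=> [s [hs ->]] [t [ht ->]]; exists (s ++ t); split; last by rewrite big_cat.
by move=> p; rewrite mem_cat => /orP [/hs|/ht].
Qed.
Lemma mprod_min (R : idomainType) (I J M : set {fraction R}) :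
  M 0 -> (forall a b, M a -> M b -> M (a + b)) ->
  (forall x y, I x -> J y -> M (x * y)) -> mprod I J `<=` M.
Proof.
move=> M0 MD MM z [s [hs ->]]; elim: s hs => [|p s IH] hs; first by rewrite big_nil.
rewrite big_cons; apply: MD; last by apply: IH => q qs; apply: hs; rewrite inE qs orbT.
by have [h1 h2] := hs p (mem_head _ _); apply: MM.
Qed.
Lemma mprod_sub (R : idomainType) (I J : set {fraction R}) :
  submodule I -> submodule (mprod I J).
Proof.
move=> hI; split; first exact: mprod0; split; first exact: mprodD.
move=> r z Rr; apply: (@mprod_min _ I J [set z | mprod I J (r * z)]).
- by rewrite /= mulr0; apply: mprod0.
- by move=> a b /= ha hb; rewrite mulrDr; apply: mprodD.
- by move=> x y Ix Jy /=; rewrite mulrA; apply: mprod_in => //; apply: subM.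
Qed.
Lemma mprodS (R : idomainType) (I J I' J' : set {fraction R}) :
  I `<=` I' -> J `<=` J' -> mprod I J `<=` mprod I' J'.
Proof.
move=> hI hJ; apply: mprod_min; [exact: mprod0|exact: mprodD|].
by move=> x y Ix Jy; apply: mprod_in; [apply: hI|apply: hJ].
Qed.
Lemma mprodC (R : idomainType) (I J : set {fraction R}) : mprod I J = mprod J I.
Proof.
by apply: seteq2; apply: mprod_min; (try exact: mprod0); (try exact: mprodD);
  move=> x y hx hy; rewrite mulrC; apply: mprod_in.
Qed.
Lemma mprodA_sub (R : idomainType) (I J L : set {fraction R}) :
  mprod (mprod I J) L `<=` mprod I (mprod J L).
Proof.
apply: mprod_min; [exact: mprod0|exact: mprodD|].
move=> z w hz Lw.
apply: (@mprod_min _ I J [set z | mprod I (mprod J L) (z * w)]) => //.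
- by rewrite /= mul0r; apply: mprod0.
- by move=> a b /= ha hb; rewrite mulrDl; apply: mprodD.
- by move=> x y Ix Jy /=; rewrite -mulrA; apply: mprod_in => //; apply: mprod_in.
Qed.
Lemma mprodA (R : idomainType) (I J L : set {fraction R}) :
  mprod (mprod I J) L = mprod I (mprod J L).
Proof.
apply: seteq2; first exact: mprodA_sub.
move=> z h.
have h1 : mprod (mprod J L) I z by rewrite mprodC.
have h2 := mprodA_sub h1; rewrite mprodC in h2.
have h3 := mprodA_sub h2; by rewrite mprodC.

Qed.
Lemma mprod1 (R : idomainType) (I : set {fraction R}) : submodule I -> mprod (Rset R) I = I.
Proof.
move=> hI; apply: seteq2.
  apply: mprod_min; [exact: sub0|move=> a b; exact: subD|].
  by move=> x y Rx Iy; apply: subM.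
by move=> x Ix; rewrite -(mul1r x); apply: mprod_in => //; apply: Rset1.
Qed.
Lemma mprod1r (R : idomainType) (I : set {fraction R}) : submodule I -> mprod I (Rset R) = I.
Proof. by move=> hI; rewrite mprodC mprod1. Qed.
Lemma mprod_subR (R : idomainType) (I J : set {fraction R}) :
  I `<=` Rset R -> J `<=` Rset R -> mprod I J `<=` Rset R.
Proof.
move=> hI hJ; apply: mprod_min; [exact: Rset0|exact: RsetD|].
by move=> x y Ix Jy; apply: RsetM; [apply: hI|apply: hJ].
Qed.
Lemma mprod_ideal (R : idomainType) (I J : set {fraction R}) :
  ideal_of I -> ideal_of J -> ideal_of (mprod I J).
Proof. by move=> [sI hI] [sJ hJ]; split; [apply: mprod_sub|apply: mprod_subR]. Qed.

Lemma msum_l (R : idomainType) (I J : set {fraction R}) : J 0 -> I `<=` msum I J.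
Proof. by move=> J0 x Ix; exists x, 0; rewrite addr0. Qed.
Lemma msum_r (R : idomainType) (I J : set {fraction R}) : I 0 -> J `<=` msum I J.
Proof. by move=> I0 x Jx; exists 0, x; rewrite add0r. Qed.
Lemma msum_min (R : idomainType) (I J M : set {fraction R}) :
  (forall a b, M a -> M b -> M (a + b)) -> I `<=` M -> J `<=` M -> msum I J `<=` M.
Proof. by move=> MD hI hJ z [x [y [Ix [Jy ->]]]]; apply: MD; [apply: hI|apply: hJ]. Qed.
Lemma msumC (R : idomainType) (I J : set {fraction R}) : msum I J = msum J I.
Proof.
by apply: seteq2 => z [x [y [Ix [Jy ->]]]]; exists y, x; rewrite addrC.
Qed.
Lemma msum_sub (R : idomainType) (I J : set {fraction R}) :
  submodule I -> submodule J -> submodule (msum I J).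
Proof.
move=> hI hJ; split; first by exists 0, 0; rewrite addr0; split; [apply: sub0|split; [apply: sub0|]].
split.
  move=> a b [x [y [Ix [Jy ->]]]] [x' [y' [Ix' [Jy' ->]]]]; exists (x + x'), (y + y').
  split; first exact: subD. split; first exact: subD.
  by rewrite addrACA.
move=> r z Rr [x [y [Ix [Jy ->]]]]; exists (r * x), (r * y).
by split; [apply: subM|split; [apply: subM|rewrite mulrDr]].
Qed.
Lemma msum_subR (R : idomainType) (I J : set {fraction R}) :
  I `<=` Rset R -> J `<=` Rset R -> msum I J `<=` Rset R.
Proof. by move=> hI hJ; apply: msum_min => //; apply: RsetD. Qed.
Lemma msum_ideal (R : idomainType) (I J : set {fraction R}) :
  ideal_of I -> ideal_of J -> ideal_of (msum I J).
Proof. by move=> [sI hI] [sJ hJ]; split; [apply: msum_sub|apply: msum_subR]. Qed.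
Lemma msumR (R : idomainType) (I : set {fraction R}) :
  I `<=` Rset R -> I 0 -> msum I (Rset R) = Rset R.
Proof.
move=> hI I0; apply: seteq2; first by apply: msum_subR.
exact: msum_r.
Qed.
Lemma mprodDr (R : idomainType) (I J L : set {fraction R}) :
  J 0 -> L 0 -> mprod I (msum J L) = msum (mprod I J) (mprod I L).
Proof.
move=> J0 L0; apply: seteq2.
  apply: mprod_min.
  - by exists 0, 0; rewrite addr0; split; [apply: mprod0|split; [apply: mprod0|]].
  - move=> a b [x [y [Ix [Jy ->]]]] [x' [y' [Ix' [Jy' ->]]]]; exists (x + x'), (y + y').
    by split; [apply: mprodD|split; [apply: mprodD|rewrite addrACA]].
  - move=> x w Ix [y [z [Jy [Lz ->]]]]; exists (x * y), (x * z).
    by split; [apply: mprod_in|split; [apply: mprod_in|rewrite mulrDr]].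
apply: msum_min; first exact: mprodD.
  by apply: mprodS => //; apply: msum_l.
by apply: mprodS => //; apply: msum_r.
Qed.

Lemma colon_inv (R : idomainType) (J J' : set {fraction R}) :
  submodule J -> submodule J' -> mprod J J' = Rset R -> colon (Rset R) J = J'.
Proof.
move=> hJ hJ' e; apply: seteq2.
  move=> z hz.
  have : mprod J J' `<=` [set w | J' (z * w)].
    apply: mprod_min.
    - by rewrite /= mulr0; apply: sub0.
    - by move=> a b /= ha hb; rewrite mulrDr; apply: subD.
    - by move=> x y Jx J'y /=; rewrite mulrA; apply: subM => //; apply: hz.
  by rewrite e => /(_ 1 (Rset1 R)) /=; rewrite mulr1.
move=> y J'y x Jx; rewrite -e (mulrC y x); exact: mprod_in.
Qed.
Lemma colon_mprod (R : idomainType) (I J J' : set {fraction R}) :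
  submodule I -> submodule J -> submodule J' -> mprod J J' = Rset R ->
  colon I J = mprod I J'.
Proof.
move=> hI hJ hJ' e; apply: seteq2.
  move=> z hz.
  have : mprod J J' `<=` [set w | mprod I J' (z * w)].
    apply: mprod_min.
    - by rewrite /= mulr0; apply: mprod0.
    - by move=> a b /= ha hb; rewrite mulrDr; apply: mprodD.
    - by move=> x y Jx J'y /=; rewrite mulrA; apply: mprod_in => //; apply: hz.
  by rewrite e => /(_ 1 (Rset1 R)) /=; rewrite mulr1.
apply: mprod_min.
- by move=> y _; rewrite mul0r; apply: sub0.
- by move=> a b ha hb y Jy; rewrite mulrDl; apply: subD => //; [apply: ha|apply: hb].
- move=> x y' Ix J'y y Jy; rewrite -mulrA (mulrC x); apply: subM => //.
  by rewrite -e (mulrC y' y); apply: mprod_in.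
Qed.

Lemma inv_sub (R : idomainType) (I : set {fraction R}) : invertible_ideal I -> submodule I.
Proof. by case. Qed.
Lemma inv_colon (R : idomainType) (I : set {fraction R}) : invertible_ideal I ->
  submodule (colon (Rset R) I) /\ mprod I (colon (Rset R) I) = Rset R.
Proof.
move=> [hI [J [hJ e]]]; rewrite (colon_inv hI hJ e); by split.
Qed.
Lemma inv_R (R : idomainType) : invertible_ideal (Rset R).
Proof.
split; first exact: Rset_sub. exists (Rset R); split; first exact: Rset_sub.
exact: (mprod1 (Rset_sub R)).
Qed.
Lemma inv_mul (R : idomainType) (I J : set {fraction R}) :
  invertible_ideal I -> invertible_ideal J -> invertible_ideal (mprod I J).
Proof.
move=> hI hJ; have [sI' eI] := inv_colon hI; have [sJ' eJ] := inv_colon hJ.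
split; first by apply: mprod_sub; apply: inv_sub.
exists (mprod (colon (Rset R) I) (colon (Rset R) J)); split; first exact: mprod_sub.
rewrite mprodA -(mprodA J) (mprodC J) mprodA eJ (mprod1r sI') eI //.
Qed.
Lemma inv_inv (R : idomainType) (I : set {fraction R}) :
  invertible_ideal I -> invertible_ideal (colon (Rset R) I).
Proof.
move=> hI; have [s e] := inv_colon hI; split => //.
by exists I; split; [apply: inv_sub|rewrite mprodC].
Qed.
Lemma inv_cancel (R : idomainType) (I A B : set {fraction R}) :
  invertible_ideal I -> submodule A -> submodule B -> mprod I A = mprod I B -> A = B.
Proof.
move=> hI sA sB e; have [s e'] := inv_colon hI.
rewrite -(mprod1 sA) -(mprod1 sB) -e' (mprodC I) !mprodA e //.
Qed.

Inductive mon (R : idomainType) (C : set (set {fraction R})) : set {fraction R} -> Prop :=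
| mon_R : mon C (Rset R)
| mon_mul c A : C c -> mon C A -> mon C (mprod c A).

Definition cbasis (R : idomainType) (C : set (set {fraction R})) :=
  (forall b, C b -> invertible_ideal b /\ b `<=` Rset R /\ b <> Rset R) /\
  (forall a b, C a -> C b -> a <> b -> msum a b = Rset R).

Lemma subD' (R : idomainType) (I : set {fraction R}) :
  submodule I -> forall a b, I a -> I b -> I (a + b).
Proof. by move=> h a b; apply: subD. Qed.

Lemma sub_eqR (R : idomainType) (S : set {fraction R}) :
  submodule S -> S 1 -> S `<=` Rset R -> S = Rset R.
Proof.
move=> sS S1 hS; apply: seteq2 => // r Rr; rewrite -(mulr1 r); exact: subM.
Qed.

Lemma mprodACA (R : idomainType) (a b c d : set {fraction R}) :
  mprod (mprod a b) (mprod c d) = mprod (mprod a c) (mprod b d).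
Proof. by rewrite !mprodA -(mprodA b) (mprodC b c) mprodA. Qed.

Lemma mon_props (R : idomainType) (C : set (set {fraction R})) A : cbasis C -> mon C A ->
  invertible_ideal A /\ A `<=` Rset R /\ submodule A.
Proof.
move=> [hC _]; elim=> [|c A0 Cc _ [iA [sA mA]]].
  by split; [exact: inv_R|split; [|exact: Rset_sub]].
have [ic [sc _]] := hC c Cc.
split; first exact: inv_mul. split; first exact: mprod_subR.
apply: mprod_sub; exact: inv_sub.
Qed.

Lemma mon_gen (R : idomainType) (C : set (set {fraction R})) A : mon C A -> ideal_gen C A.
Proof. elim=> [|c A0 Cc _ IH]; [exact: gen_R|apply: gen_mul => //; exact: gen_B]. Qed.

Lemma mon_mprod (R : idomainType) (C : set (set {fraction R})) A B : cbasis C ->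
  mon C A -> mon C B -> mon C (mprod A B).
Proof.
move=> hC; elim=> [|c A0 Cc _ IH] mB.
  by have [_ [_ sB]] := mon_props hC mB; rewrite mprod1.
by rewrite mprodA; apply: mon_mul => //; apply: IH.
Qed.

Lemma cop_mul (R : idomainType) (x y z : set {fraction R}) :
  submodule x -> submodule y -> submodule z ->
  x `<=` Rset R -> y `<=` Rset R -> z `<=` Rset R ->
  msum x y = Rset R -> msum x z = Rset R -> msum x (mprod y z) = Rset R.
Proof.
move=> sx sy sz hx hy hz exy exz.
apply: sub_eqR; first by apply: msum_sub => //; apply: mprod_sub.
- have : Rset R 1 by apply: Rset1.
  rewrite -{1}exy => -[a [b [xa [yb e1]]]].
  have : Rset R 1 by apply: Rset1.
  rewrite -{1}exz => -[a' [b' [xa' [zb' e2]]]].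
  exists (a + b * a'), (b * b'); split; first by apply: subD => //; apply: subM => //; apply: hy.
  split; first exact: mprod_in.
  by rewrite -addrA -mulrDr -e2 mulr1.
- by apply: msum_subR => //; apply: mprod_subR.
Qed.

Lemma mon_split (R : idomainType) (C : set (set {fraction R})) A c : cbasis C ->
  mon C A -> C c ->
  (exists A0, mon C A0 /\ A = mprod c A0) \/ msum c A = Rset R.
Proof.
move=> hC mA Cc; have [hC1 hC2] := hC; have [ic [sc _]] := hC1 c Cc.
elim: mA => [|d A1 Cd mA1 IH].
  by right; rewrite msumR //; apply: sub0; apply: inv_sub.
have [->|ncd] := pselect (c = d); first by left; exists A1.
have [id [sd _]] := hC1 d Cd.
have ecd := hC2 c d Cc Cd ncd.
have [iA1 [sA1 mA1']] := mon_props hC mA1.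
case: IH => [[A0 [mA0 ->]]|e].
  left; exists (mprod d A0); split; first exact: mon_mul.
  by rewrite -!mprodA (mprodC d c).
right; apply: cop_mul => //; exact: inv_sub.
Qed.

Lemma mon_msum (R : idomainType) (C : set (set {fraction R})) A B : cbasis C ->
  mon C A -> mon C B -> mon C (msum A B).
Proof.
move=> hC mA; elim: mA B => [|c A0 Cc mA0 IH] B mB.
  have [_ [sB mB']] := mon_props hC mB.
  by rewrite msumC msumR //; [exact: mon_R|exact: sub0].
have [hC1 _] := hC; have [ic [sc _]] := hC1 c Cc; have sc' := inv_sub ic.
have [_ [sA0 mA0']] := mon_props hC mA0.
have [_ [sB mB']] := mon_props hC mB.
case: (mon_split hC mB Cc) => [[B0 [mB0 ->]]|e].
  have [_ [_ mB0']] := mon_props hC mB0.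
  rewrite -mprodDr; [|exact: sub0|exact: sub0].
  by apply: mon_mul => //; apply: IH.
suff -> : msum (mprod c A0) B = msum A0 B by apply: IH.
apply: seteq2.
  apply: msum_min; first by apply: subD'; apply: msum_sub.
    move=> z hz; have := mprodS sc (@subset_refl _ A0) hz; rewrite mprod1 // => h.
    by apply: msum_l => //; exact: sub0.
  apply: msum_r; exact: sub0.
have sT : submodule (msum (mprod c A0) B) by apply: msum_sub => //; apply: mprod_sub.
apply: msum_min; [exact: subD' sT|idtac|by apply: msum_r; apply: sub0; apply: mprod_sub].
have eA0 : A0 = msum (mprod A0 c) (mprod A0 B).
  by rewrite -mprodDr ?e ?mprod1r //; apply: sub0.
rewrite {1}eA0.
apply: msum_min; first exact: subD' sT.
  by rewrite mprodC; apply: msum_l; apply: sub0.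
move=> z hz; have := mprodS sA0 (@subset_refl _ B) hz; rewrite mprod1 // => h.
by apply: msum_r => //; apply: sub0; apply: mprod_sub.
Qed.

Lemma invR (R : idomainType) : colon (Rset R) (Rset R) = Rset R.
Proof. apply: colon_inv; [exact: Rset_sub|exact: Rset_sub|exact: (mprod1 (Rset_sub R))]. Qed.

Lemma inv_mprod (R : idomainType) (A B : set {fraction R}) :
  invertible_ideal A -> invertible_ideal B ->
  colon (Rset R) (mprod A B) = mprod (colon (Rset R) A) (colon (Rset R) B).
Proof.
move=> hA hB; have [sA' eA] := inv_colon hA; have [sB' eB] := inv_colon hB.
apply: colon_inv; [apply: mprod_sub; exact: inv_sub|exact: mprod_sub|].
by rewrite mprodACA eA eB (mprod1 (Rset_sub R)).
Qed.

Lemma inv_invK (R : idomainType) (B : set {fraction R}) :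
  invertible_ideal B -> colon (Rset R) (colon (Rset R) B) = B.
Proof.
move=> hB; have [sB' eB] := inv_colon hB.
by apply: colon_inv => //; [exact: inv_sub|rewrite mprodC].
Qed.

Lemma gen_rep (R : idomainType) (C : set (set {fraction R})) I : cbasis C ->
  ideal_gen C I -> exists A B, mon C A /\ mon C B /\ I = mprod A (colon (Rset R) B).
Proof.
move=> hC; elim=> [|c Cc|I1 J1 _ [A1 [B1 [mA1 [mB1 ->]]]] _ [A2 [B2 [mA2 [mB2 ->]]]]
   |I1 _ [A [B [mA [mB ->]]]]].
- exists (Rset R), (Rset R); split; first exact: mon_R. split; first exact: mon_R.
  by rewrite invR (mprod1 (Rset_sub R)).
- have [hC1 _] := hC; have [ic _] := hC1 c Cc.
  exists (mprod c (Rset R)), (Rset R); split; first by apply: mon_mul => //; exact: mon_R.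
  split; first exact: mon_R.
  have sc := inv_sub ic; by rewrite invR (mprod1r sc) (mprod1r sc).
- exists (mprod A1 A2), (mprod B1 B2); split; first exact: mon_mprod.
  split; first exact: mon_mprod.
  have [iB1 _] := mon_props hC mB1; have [iB2 _] := mon_props hC mB2.
  by rewrite inv_mprod // mprodACA.
- exists B, A; split => //; split => //.
  have [iA [_ sA]] := mon_props hC mA; have [iB [_ sB]] := mon_props hC mB.
  have iB' := inv_inv iB.
  by rewrite (inv_mprod iA iB') (inv_invK iB) mprodC.
Qed.

Lemma mon_nonneg (R : idomainType) (C : set (set {fraction R})) B : cbasis C ->
  mon C B -> forall A, mon C A -> mprod A (colon (Rset R) B) `<=` Rset R ->
  mon C (mprod A (colon (Rset R) B)).
Proof.
move=> hC; have [hC1 _] := hC.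
elim=> [|c B0 Cc mB0 IH] A mA hsub.
  by have [_ [_ sA]] := mon_props hC mA; rewrite invR mprod1r.
have [ic [sc nc]] := hC1 c Cc; have [sc' ec] := inv_colon ic.
have [iB0 [sB0 mB0']] := mon_props hC mB0; have [sB0' eB0] := inv_colon iB0.
have [iA [sA mA']] := mon_props hC mA.
case: (mon_split hC mA Cc) => [[A0 [mA0 eA]]|e].
  have [iA0 [sA0 mA0']] := mon_props hC mA0.
  have E : mprod A (colon (Rset R) (mprod c B0)) = mprod A0 (colon (Rset R) B0).
    by rewrite inv_mprod // eA mprodACA ec (mprod1 _) //; apply: mprod_sub.
  rewrite E; apply: IH => //; by rewrite -E.
exfalso; apply: nc.
have iBf : invertible_ideal (mprod c B0) by apply: inv_mul.
have [sBf' eBf] := inv_colon iBf.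
have hAc : A `<=` c.
  move=> z Az.
  have : mprod (mprod A (colon (Rset R) (mprod c B0))) (mprod c B0) z.
    by rewrite mprodA (mprodC _ (mprod c B0)) eBf mprod1r.
  move=> /(mprodS hsub (@subset_refl _ _)); rewrite mprod1; last by apply: inv_sub.
  move=> /(mprodS (@subset_refl _ c) sB0); rewrite mprod1r //; exact: inv_sub.
apply: seteq2 => //; rewrite -e; apply: msum_min => //.
by apply: subD'; apply: inv_sub.
Qed.

Lemma closure_mon (R : idomainType) (X C : set (set {fraction R})) :
  (forall I, X I -> nonzero_ideal I) -> coprime_basis X C ->
  forall I, ideal_closure X I -> mon C I.
Proof.
move=> hX [hC1 [hC2 hC3]]; have hC : cbasis C by split.
move=> I0; elim=> [I XI||I J _ mI _ mJ|I J _ mI _ mJ|I J _ mI _ mJ oI oJ iJ hsub].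
- have [[sI hIR] _] := hX I XI.
  have [A [B [mA [mB E]]]] := gen_rep hC (hC3 I XI).
  rewrite E in hIR *; exact: mon_nonneg.
- exact: mon_R.
- exact: mon_msum.
- exact: mon_mprod.
- have [sJ' eJ] := inv_colon iJ.
  have [_ [_ sI]] := mon_props hC mI.
  have E : colon I J = mprod I (colon (Rset R) J) by apply: colon_mprod => //; exact: inv_sub.
  rewrite E in hsub *; exact: mon_nonneg.
Qed.

Import Order.TTheory Num.Theory.
Lemma seteq2' T (A B : set T) : A `<=` B -> B `<=` A -> A = B.
Proof. by move=> h1 h2; rewrite eqEsubset; split. Qed.

Definition zsub (V : zmodType) (G : set V) := G 0 /\ forall x y, G x -> G y -> G (x - y).
Definition srel (V : zmodType) (P : set V) (H G : set V) :=
  zsub G /\ zsub H /\ G `<=` H /\ G <> H /\ H `<=` P.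

Lemma wf_img A B (r1 : A -> A -> Prop) (r2 : B -> B -> Prop) (f : A -> B) :
  (forall x y, r1 x y -> r2 (f x) (f y)) -> well_founded r2 -> well_founded r1.
Proof.
move=> hf w2.
suff H : forall b, Acc r2 b -> forall a, f a = b -> Acc r1 a by move=> a; apply: (H (f a)).
move=> b; elim=> b' _ IH a ea; constructor => a' r; apply: (IH (f a')) => //.
by rewrite -ea; apply: hf.
Qed.

Lemma wf_sub A (r1 r2 : A -> A -> Prop) :
  (forall x y, r1 x y -> r2 x y) -> well_founded r2 -> well_founded r1.
Proof. by move=> h; apply: (@wf_img _ _ r1 r2 id). Qed.

Lemma wf_lex A B (ra : A -> A -> Prop) (rb : B -> B -> Prop) :
  well_founded ra -> well_founded rb ->
  well_founded (fun p q : A * B => ra p.1 q.1 \/ (p.1 = q.1 /\ rb p.2 q.2)).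
Proof.
move=> wa wb [a b]; move: b; elim: (wa a) => {}a _ IHa b.
elim: (wb b) => {}b _ IHb; constructor => -[a' b'] /= [h|[e h]].
  exact: IHa.
by rewrite e; apply: IHb.
Qed.

Lemma zsub_opp (V : zmodType) (G : set V) x : zsub G -> G x -> G (- x).
Proof. by move=> [G0 GB] Gx; rewrite -sub0r; apply: GB. Qed.
Lemma zsub_add (V : zmodType) (G : set V) x y : zsub G -> G x -> G y -> G (x + y).
Proof.
by move=> hG Gx Gy; rewrite -(opprK y); apply: hG.2 => //; apply: zsub_opp.
Qed.

Lemma wfS_step (V W : zmodType) (P P' : set V) (phi : V -> W) :
  (forall x y, phi (x - y) = phi x - phi y) ->
  well_founded (@srel W setT) -> well_founded (srel P') ->
  (forall v, P v -> phi v = 0 -> P' v) -> well_founded (srel P).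
Proof.
move=> hphi wW wP' hPP'.
have phi0 : phi 0 = 0 by move: (hphi 0 0); rewrite !subrr.
pose f (H : set V) := ([set v | H v /\ phi v = 0], [set w | exists v, H v /\ phi v = w]).
apply: (@wf_img _ _ _ _ f _ (wf_lex wP' wW)).
move=> H G [zG [zH [GH [nGH HP]]]].
have z1 : forall K, zsub K -> zsub (f K).1.
  move=> K zK; split; first by split; [exact: zK.1|].
  by move=> x y [Kx px] [Ky py]; split; [apply: zK.2|rewrite hphi px py subrr].
have z2 : forall K, zsub K -> zsub (f K).2.
  move=> K zK; split; first by exists 0; split; [exact: zK.1|].
  by move=> x y [v [Kv <-]] [v' [Kv' <-]]; exists (v - v'); split; [apply: zK.2|].
have [e1|n1] := pselect ((f H).1 = (f G).1); [right|left].
  split => //; split; first exact: z2. split; first exact: z2.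
  split; first by move=> w [v [Gv <-]]; exists v; split => //; apply: GH.
  split => //.
  move=> e2; apply: nGH; apply: seteq2' => // h Hh.
  have : (f H).2 (phi h) by exists h.
  rewrite -e2 => -[g [Gg pg]].
  have : (f H).1 (h - g) by split; [apply: zH.2 => //; apply: GH|rewrite hphi pg subrr].
  rewrite e1 => -[Ghg _].
  have -> : h = (h - g) - (- g) by rewrite opprK subrK.
  by apply: zG.2 => //; apply: zsub_opp.
split; first exact: z1. split; first exact: z1.
split; first by move=> v [Gv pv]; split => //; apply: GH.
split; first by move=> e; apply: n1.
by move=> v [Hv pv]; apply: hPP' => //; apply: HP.
Qed.

Lemma zsub_mull (G : set int) x (z : int) : zsub G -> G x -> G (z * x).
Proof.
move=> hG Gx.
have hn : forall n : nat, G (x *+ n).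
  elim=> [|n IH]; first by rewrite mulr0n; exact: hG.1.
  by rewrite mulrS; apply: zsub_add.
case: z => n; first by rewrite -natz mulr_natl.
by rewrite NegzE mulNr -natz mulr_natl; apply: zsub_opp.
Qed.

Lemma acc_int_pos (n : nat) : forall p : nat, (p <= n)%N -> (0 < p)%N ->
  forall G : set int, zsub G -> G p%:Z -> Acc (@srel _ setT) G.
Proof.
elim: n => [|n IH] p hpn hp0 G zG Gp; first by move: hp0; rewrite leqn0 in hpn; rewrite (eqP hpn).
constructor => H [_ [zH [GH [nGH _]]]].
have Hp : H p%:Z by apply: GH.
have [[q [/andP [q0 qp] Hq]]|nq] := pselect (exists q : nat, (0 < q < p)%N /\ H q%:Z).
  apply: (IH q) => //; rewrite -ltnS; exact: leq_trans qp hpn.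
exfalso; apply: nGH; apply: seteq2' => // h Hh.
have p0 : (p%:Z != 0) by rewrite eqz_nat -lt0n.
have E := divz_eq h p%:Z.
have Hm : H ((h %/ p%:Z)%Z * p%:Z) by apply: zsub_mull.
have Hr : H (h %% p%:Z)%Z.
  have -> : (h %% p%:Z)%Z = h - (h %/ p%:Z)%Z * p%:Z by rewrite {2}E addrAC subrr add0r.
  by apply: zH.2.
have r0 : (0 <= (h %% p%:Z)%Z) by apply: modz_ge0.
have rp : ((h %% p%:Z)%Z < p%:Z) by apply: ltz_pmod; rewrite ltz_nat.
have rz : (h %% p%:Z)%Z = 0.
  apply: contrapT => hne'; have hne : (h %% p%:Z)%Z != 0 by apply/eqP.
  apply: nq.
  exists `|(h %% p%:Z)%Z|%N; rewrite gez0_abs //; split => //.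
  apply/andP; split; first by rewrite -ltz_nat gez0_abs // lt_def hne r0.
  by rewrite -ltz_nat gez0_abs.
rewrite E rz addr0; apply: zsub_mull => //.
Qed.

Lemma wf_int : well_founded (@srel int setT).
Proof.
move=> G; constructor => H [zG [zH [GH [nGH _]]]].
have [h [Hh nGh]] : exists h, H h /\ ~ G h.
  apply: contrapT => nex; apply: nGH; apply: seteq2' => // h Hh.
  by apply: contrapT => nGh; apply: nex; exists h.
have h0 : h != 0 by apply/eqP => e; apply: nGh; rewrite e; exact: zG.1.
have [hpos|hneg] := ltP 0 h.
  apply: (@acc_int_pos `|h|%N `|h|%N) => //; first by rewrite absz_gt0.
  by rewrite gez0_abs // ltW.
apply: (@acc_int_pos `|h|%N `|h|%N) => //; first by rewrite absz_gt0.
have hlt : h < 0 by rewrite lt_neqAle h0 hneg.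
by rewrite ltz0_abs //; apply: zsub_opp.
Qed.

Definition Pk (m k : nat) : set 'rV[int]_m := [set v | forall i : 'I_m, (k <= i)%N -> v 0 i = 0].
Arguments Pk m k : clear implicits.

Lemma wf_Pk (m : nat) : forall k, well_founded (srel (Pk m k)).
Proof.
elim=> [|k IH].
  move=> G; constructor => H [zG [zH [GH [nGH HP]]]]; exfalso; apply: nGH.
  apply: seteq2' => // v Hv.
  have -> : v = 0 by apply/matrixP => i j; rewrite mxE (ord1 i); apply: (HP v Hv).
  exact: zG.1.
have [km|km] := ltnP k m.
  pose phi (v : 'rV[int]_m) : int := v 0 (Ordinal km).
  have h1 : forall x y, phi (x - y) = phi x - phi y by move=> x y; rewrite /phi !mxE.
  have h2 : forall v, Pk m k.+1 v -> phi v = 0 -> Pk m k v.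
    move=> v Pv pv i; rewrite leq_eqVlt => /orP [/eqP e|lt]; last by apply: Pv.
    by rewrite -pv /phi; congr (v 0 _); apply: val_inj.
  exact: (@wfS_step 'rV[int]_m int (Pk m k.+1) (Pk m k) phi h1 wf_int IH h2).
apply: (wf_sub _ IH) => H G [zG [zH [GH [nGH HP]]]]; do 4 (split => //).
move=> v Hv i ki; exfalso; have := ltn_ord i; rewrite ltnNge.
by rewrite (leq_trans km ki).
Qed.

Lemma wf_Zn (m : nat) : well_founded (@srel 'rV[int]_m setT).
Proof.
apply: (@wf_sub _ (@srel _ setT) (srel (Pk m m)) _ (@wf_Pk m m)) => H G [zG [zH [GH [nGH HP]]]]; do 4 (split => //).
move=> v _ i mi; exfalso; have := ltn_ord i; by rewrite ltnNge mi.
Qed.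

Definition irel (R : idomainType) (J I : set {fraction R}) :=
  ideal_of I /\ ideal_of J /\ I `<=` J /\ I <> J.

Lemma wf_ideal (R : idomainType) : is_order R -> well_founded (@irel R).
Proof.
move=> [n [f [hf bf]]].
have f0 : f 0 = 0 by move: (hf 0 0); rewrite !subrr.
have finj := bij_inj bf.
pose g (I : set {fraction R}) : set 'rV[int]_n :=
  [set v | exists r, I (FracField.tofrac r) /\ f r = v].
apply: (@wf_img _ _ (@irel R) (@srel _ setT) g _ (@wf_Zn n)).
move=> J I [[sI hIR] [[sJ hJR] [IJ nIJ]]].
have zg : forall K, submodule K -> zsub (g K).
  move=> K sK; split; first by exists 0; rewrite rmorph0 f0; split => //; apply: sub0.
  move=> x y [r [Kr <-]] [r' [Kr' <-]]; exists (r - r'); split; last exact: hf.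
  by rewrite rmorphB; apply: subB.
split; first exact: zg. split; first exact: zg.
split; first by move=> v [r [Ir <-]]; exists r; split => //; apply: IJ.
split => //.
move=> e; apply: nIJ; apply: seteq2 => // x Jx.
have [r xr] := hJR x Jx.
have : g J (f r) by exists r; rewrite -xr.
rewrite -e => -[r' [Ir' fr']]; have rr := finj _ _ fr'.
by rewrite xr -rr.
Qed.

Lemma wf_max A (r : A -> A -> Prop) (F : set A) a :
  well_founded r -> F a -> exists m, F m /\ forall x, F x -> ~ r x m.
Proof.
move=> w Fa; apply: contrapT => nex.
suff : forall m, Acc r m -> ~ F m by move=> /(_ a (w a)).
move=> m; elim=> {}m _ IH Fm; apply: nex; exists m; split => // x Fx rxm.
exact: (IH x rxm Fx).
Qed.

Lemma colon_sub (R : idomainType) (I J : set {fraction R}) :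
  submodule I -> submodule (colon I J).
Proof.
move=> sI; split; first by move=> y _; rewrite mul0r; apply: sub0.
split; first by move=> a b ha hb y Jy; rewrite mulrDl; apply: subD; [|apply: ha|apply: hb].
by move=> r x Rr hx y Jy; rewrite -mulrA; apply: subM => //; apply: hx.
Qed.

Lemma closure_ideal (R : idomainType) (X : set (set {fraction R})) :
  (forall I, X I -> nonzero_ideal I) -> forall I, ideal_closure X I -> ideal_of I.
Proof.
move=> hX I0; elim=> [I XI||I J _ hI _ hJ|I J _ hI _ hJ|I J _ hI _ hJ oI oJ iJ hsub].
- by case: (hX I XI).
- by split; [exact: Rset_sub|].
- exact: msum_ideal.
- exact: mprod_ideal.
- by split => //; apply: colon_sub; case: oI.
Qed.

Definition Sset (R : idomainType) (X : set (set {fraction R})) :=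
  [set I | ideal_closure X I /\ card_two [set J | ideal_closure X J /\ I `<=` J]].

Lemma S_elim (R : idomainType) (X : set (set {fraction R})) I :
  (forall I, X I -> nonzero_ideal I) -> Sset X I ->
  I <> Rset R /\ forall J, ideal_closure X J -> I `<=` J -> J = I \/ J = Rset R.
Proof.
move=> hX [cI [a [b [nab [[ca Ia] [[cb Ib] hc]]]]]].
have [_ IR] := closure_ideal hX cI.
have hR : forall K, ideal_closure X K -> Rset R `<=` K -> K = Rset R.
  move=> K cK RK; apply: seteq2 => //; by case: (closure_ideal hX cK).
have [eI|eI] := hc I (conj cI (@subset_refl _ I));
have [eR|eR] := hc (Rset R) (conj (cl_R X) IR).
- exfalso; apply: nab; have Rb : Rset R `<=` b by rewrite eR -eI.
  by rewrite -eR (hR b cb Rb).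
- split; first by move=> e; apply: nab; rewrite -eI -eR e.
  by move=> J cJ IJ; have [->|->] := hc J (conj cJ IJ); [left|right].
- split; first by move=> e; apply: nab; rewrite -eI -eR e.
  by move=> J cJ IJ; have [->|->] := hc J (conj cJ IJ); [right|left].
- exfalso; apply: nab; have Ra : Rset R `<=` a by rewrite eR -eI.
  by rewrite -eR (hR a ca Ra).
Qed.

Lemma S_basis (R : idomainType) (X : set (set {fraction R})) :
  is_order R -> (forall I, X I -> nonzero_ideal I) ->
  (forall I, ideal_closure X I -> invertible_ideal I) -> coprime_basis X (Sset X).
Proof.
move=> hR hX hInv.
split.
  move=> b Sb; have [nb _] := S_elim hX Sb; have [cb _] := Sb.
  have [_ bR] := closure_ideal hX cb.
  by split; [exact: hInv|split].
split.
  move=> a b Sa Sb nab; have [_ ma] := S_elim hX Sa; have [_ mb] := S_elim hX Sb.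
  have [ca _] := Sa; have [cb _] := Sb.
  have [[sa _] [sb _]] := (closure_ideal hX ca, closure_ideal hX cb).
  have cab : ideal_closure X (msum a b) by apply: cl_add.
  have [ea|e] := ma _ cab (msum_l (sub0 sb)); last exact: e.
  have [eb|e] := mb _ (eq_ind _ (ideal_closure X) cab _ (msumC a b)) (msum_l (sub0 sa)); last by rewrite msumC.
  by exfalso; apply: nab; have := msumC a b; rewrite ea eb.
move=> I0 XI0; have cI0 := cl_X XI0; move: cI0; clear XI0.
elim/(well_founded_ind (wf_ideal hR)): I0 => I IH cI.
have [eR|nR] := pselect (I = Rset R); first by rewrite eR; exact: gen_R.
pose F := [set J | ideal_closure X J /\ I `<=` J /\ J <> Rset R].
have [J [[cJ [IJ nJ]] mJ]] := wf_max (wf_ideal hR) (conj cI (conj (@subset_refl _ I) nR) : F I).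
have [sJ JR] := closure_ideal hX cJ; have [sI IR] := closure_ideal hX cI.
have iJ := hInv J cJ; have [sJ' eJ] := inv_colon iJ.
have SJ : Sset X J.
  split => //; exists J, (Rset R); split; first by move=> e; apply: nJ.
  split; first by split.
  split; first by split; [exact: cl_R|].
  move=> K [cK JK]; have [eK|nK] := pselect (K = Rset R); first by right.
  left; apply: contrapT => nKJ; apply: (mJ K); first by split => //; split => //; apply: subset_trans JK.
  split; first by split.
  split; first exact: (closure_ideal hX cK).
  by split => // e; apply: nKJ.
have eIJ : colon I J = mprod I (colon (Rset R) J) by apply: colon_mprod.
have cI' : ideal_closure X (colon I J).
  apply: cl_div => //; try by split.
  move=> x hx; rewrite -eJ -(colon_mprod sJ sJ sJ' eJ).
  by move=> y Jy; apply: IJ; apply: hx.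
have EI : mprod J (colon I J) = I.
  by rewrite eIJ -mprodA (mprodC J I) mprodA eJ mprod1r.
rewrite -EI; apply: gen_mul; first exact: gen_B.
apply: IH => //.
split; first by split. split; first exact: (closure_ideal hX cI').
split; first by move=> x Ix y Jy; rewrite mulrC; apply: subM => //; apply: JR.
move=> e; apply: nJ.
have iI := hInv I cI; have [sI' eI'] := inv_colon iI.
rewrite -e in EI.
by rewrite -eI' -{1}EI mprodA eI' mprod1r.
Qed.

Lemma gen_mono (R : idomainType) (B C : set (set {fraction R})) :
  B `<=` ideal_gen C -> ideal_gen B `<=` ideal_gen C.
Proof.
move=> h I; elim=> [|J BJ|I1 J1 _ h1 _ h2|I1 _ h1].
- exact: gen_R.
- exact: h.
- exact: gen_mul.
- exact: gen_inv.
Qed.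

Local Close Scope ring_scope.

Theorem proposition4p67 (R : idomainType) (hR : is_order R)
  (X : set (set {fraction R})) (hX : forall I, X I -> nonzero_ideal I) :
  ((forall I, ideal_closure X I -> invertible_ideal I) <-> (exists B, coprime_basis X B)) /\
  ((exists B, coprime_basis X B) ->
     coprime_basis X [set I | ideal_closure X I /\ card_two [set J | ideal_closure X J /\ I `<=` J]] /\
     (forall C, coprime_basis X C ->
        ideal_gen [set I | ideal_closure X I /\ card_two [set J | ideal_closure X J /\ I `<=` J]]
        `<=` ideal_gen C)).
Proof.
have inv_of : (exists B, coprime_basis X B) -> forall I, ideal_closure X I -> invertible_ideal I.
  move=> [C hC] I cI.
  have hcb : cbasis C by case: hC => h1 [h2 _]; split.
  by have [] := mon_props hcb (closure_mon hX hC cI).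
split; first split.
- by move=> hInv; exists (Sset X); exact: (S_basis hR hX hInv).
- exact: inv_of.
move=> hB; have hInv := inv_of hB.
split; first exact: (S_basis hR hX hInv).
move=> D hD; apply: gen_mono => I [cI _]; apply: mon_gen; exact: (closure_mon hX hD cI).
Qed.
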